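(* For every $n\ge0$, $$B^n=\sum_{m=0}^{\lfloor n/2\rfloor}[n-2m]!\Big(\sum_{\alpha\in\mathcal P_t(m\times(n-2m))}[\alpha_1+1]^2\cdots[\alpha_m+1]^2\Big)P_{n-2m}.$$
   Context: Fix $t\in\{0,1\}$. Let $\mathbf U^\imath_t=\mathbb Q(q)[B]$ be the polynomial algebra in $B$ over $\mathbb Q(q)$, $[n]=(q^n-q^{-n})/(q-q^{-1})$, $[n]!=[1]\cdots[n]$. The $\imath$-canonical basis is $P_n=\frac{B^{\sigma_t(n)}}{[n]!}\prod_{0\le k\le n-1,\ k\equiv t\ (2)}(B^2-[k]^2)$, where $\sigma_t(n)=0$ for $n$ even, $-1$ for $n$ odd and $t=0$, $1$ for $n$ odd and $t=1$ (when $\sigma_t(n)=-1$ the product contains the factor $B^2$, so $P_n$ is a polynomial). For $m,k\ge0$, $\mathcal P_t(m\times k)$ is the set of $\alpha\in\mathbb N^m$ with $0\le\alpha_1\le\cdots\le\alpha_m\le k$ and $\alpha_i\not\equiv t\pmod2$ for each $i$. *)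

(* Defs.v *)
From HB Require Import structures.
From mathcomp Require Import all_boot all_order all_algebra.
From mathcomp Require Import fraction.
Set Implicit Arguments. Unset Strict Implicit. Unset Printing Implicit Defensive.
Import Order.TTheory GRing.Theory Num.Theory.
Local Open Scope ring_scope.

Definition Qq : fieldType := {fraction {poly rat}}.

Definition qq : Qq := tofrac ('X : {poly rat}).

Definition qint (n : nat) : Qq := (qq ^+ n - qq ^- n) / (qq - qq^-1).

Definition qfact (n : nat) : Qq := \prod_(1 <= i < n.+1) qint i.

(* U^imath_t = Q(q)[B] is modelled as {poly Qq}, with B = 'X. *)
Notation UI := {poly Qq}.

Definition iprod (t n : nat) : UI :=
  \prod_(0 <= k < n | (k %% 2 == t)%N) ('X ^+ 2 - ((qint k) ^+ 2)%:P).

(* The imath-canonical basis element P_n: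
   - n even:            P_n = (1/[n]!) * prod
   - n odd and t = 0:   P_n = (1/[n]!) * B^{-1} * prod  (prod contains B^2,
                        so B^{-1} * prod is computed as exact division by B)
   - n odd and t = 1:   P_n = (1/[n]!) * B * prod *)
Definition Pcan (t n : nat) : UI :=
  (qfact n)^-1 *:
    (if ~~ odd n then iprod t n
     else if t == 0%N then iprod t n %/ 'X
     else 'X * iprod t n).

(* Sum over alpha in P_t(m x k) of [alpha_1+1]^2 ... [alpha_m+1]^2, where
   P_t(m x k) = { alpha in N^m : 0 <= alpha_1 <= ... <= alpha_m <= k,
                  alpha_i not = t mod 2 }.
   alpha is represented as an m-tuple of elements of 'I_(k.+1), i.e. entries <= k. *)
Definition partsum (t m k : nat) : Qq :=
  \sum_(a : m.-tuple 'I_k.+1 |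
          sorted leq (map (@nat_of_ord _) a) &&
          all (fun x : 'I_k.+1 => ((x : nat) %% 2 != t)%N) a)
     \prod_(x <- a) (qint (x : nat).+1) ^+ 2.

(* Main.v *)
Require Import Defs.
From HB Require Import structures.
From mathcomp Require Import all_boot all_order all_algebra.
From mathcomp Require Import fraction.
Import Order.TTheory GRing.Theory Num.Theory.
Local Open Scope ring_scope.
Lemma qq_neq0 : qq != 0.
Proof. by rewrite /qq tofrac_eq0 polyX_eq0. Qed.
Lemma qqX n : qq ^+ n = tofrac ('X^n : {poly rat}).
Proof. by rewrite /qq rmorphXn. Qed.
Lemma Xn_neq1 j : (0 < j)%N -> ('X^j : {poly rat}) != 1.
Proof.
move=> hj; apply/eqP => E.
have := size_polyXn rat j.
rewrite E size_poly1. case: j hj {E} => // k _ [] //.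
Qed.
Lemma qint_neq0 i : (0 < i)%N -> qint i != 0.
Proof.
move=> hi; rewrite /qint mulf_eq0 invr_eq0 negb_or.
have H : forall j, (0 < j)%N -> qq ^+ j - qq ^- j != 0.
  move=> j hj; rewrite subr_eq0; apply/eqP => E.
  have qj : qq ^+ j != 0 by apply: expf_neq0; exact: qq_neq0.
  have : qq ^+ j * qq ^+ j = 1.
    rewrite {2}E. exact: (mulfV qj).
  rewrite -exprD qqX -(rmorph1 (@tofrac _)) => /eqP; rewrite tofrac_eq.
  apply/negP/Xn_neq1; by rewrite addn_gt0 hj.
apply/andP; split; first exact: H.
have := H 1%N isT; rewrite expr1; exact: id.
Qed.
Lemma qint0 : qint 0 = 0.
Proof. rewrite /qint expr0 invr1 subrr; exact: mul0r. Qed.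
Lemma qfact_neq0 n : qfact n != 0.
Proof.
rewrite /qfact prodf_seq_neq0; apply/allP => i; rewrite mem_index_iota => /andP [h _]; exact: qint_neq0.
Qed.
From mathcomp Require Import ring.
Definition Qp (t n : nat) : UI :=
  if ~~ odd n then iprod t n
  else if t == 0%N then iprod t n %/ 'X else 'X * iprod t n.
Lemma Pcan_Qp t n : qfact n *: Pcan t n = Qp t n.
Proof. rewrite /Pcan scalerA mulfV ?qfact_neq0 // scale1r. reflexivity. Qed.
Definition ef (t n : nat) : UI :=
  if (n %% 2 == t)%N then 'X^2 - (qint n ^+ 2)%:P else 1.
Lemma iprodS t n : iprod t n.+1 = iprod t n * ef t n.
Proof.
rewrite /iprod big_mkcond big_nat_recr //= -big_mkcond /ef. reflexivity.
Qed.
Lemma iprod0 t : iprod t 0 = 1.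
Proof. rewrite /iprod big_geq //. Qed.
Lemma iprod0_div n : iprod 0 n.+1 = (iprod 0 n.+1 %/ 'X) * 'X.
Proof.
rewrite divpK //. elim: n => [|n IH].
  rewrite iprodS iprod0 mul1r /ef /= qint0 expr0n /= subr0. exact: dvdp_mulIl.
rewrite iprodS; exact: dvdp_mulr.
Qed.
Definition cf (t n : nat) : Qq := if (n %% 2 == t)%N then qint n ^+ 2 else 0.
Lemma X_neq0 : ('X : UI) != 0. Proof. by rewrite polyX_eq0. Qed.
Lemma Qp_rec t n : (t <= 1)%N ->
  'X * Qp t n = Qp t n.+1 + cf t n *: Qp t n.-1.
Proof.
move=> ht.
case: n => [|n].
  rewrite /cf mod0n qint0 expr0n /= if_same scale0r addr0.
  rewrite /Qp /= iprodS iprod0 mul1r /ef mod0n.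
  case: t ht => [|[|]] // _ /=.
    rewrite qint0 expr0n /= subr0 mulr1 expr2 mulpK ?X_neq0 //.
rewrite /= /Qp /= !iprodS /cf /ef !modn2 /=.
case: t ht => [|[|]] // _; case hn: (odd n) => /=.
- case: n hn => [|n'] // hn.
  have hD := iprod0_div n'. set D := iprod 0 n'.+1 %/ 'X in hD.
  rewrite hD.
  have -> : D * 'X * 1 * ('X^2 - (qint n'.+2 ^+ 2)%:P) = (D * ('X^2 - (qint n'.+2 ^+ 2)%:P)) * 'X by ring.
  rewrite !mulpK ?X_neq0 // -mul_polyC. ring.
- have key := iprod0_div n; rewrite iprodS /ef modn2 hn /= in key.
  rewrite scale0r addr0 mulr1 {2}key mulrC. reflexivity.
- rewrite scale0r addr0 mulr1. reflexivity.
- rewrite -mul_polyC. ring.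
Qed.
From mathcomp Require Import zify.
Local Open Scope nat_scope.
Fixpoint SL (m k : nat) : seq (seq nat) :=
  match m with
  | 0 => [:: [::]]
  | m'.+1 => (fix g k := (if k is k'.+1 then g k' else [::]) ++ map (rcons^~ k) (SL m' k)) k
  end.
Lemma SL_S m k : SL m.+1 k = (if k is k'.+1 then SL m.+1 k' else [::]) ++ map (rcons^~ k) (SL m k).
Proof. by case: k. Qed.

Lemma sorted_rcons_leq (s : seq nat) x :
  sorted leq (rcons s x) = sorted leq s && all (fun y => y <= x) s.
Proof.
rewrite -rev_sorted rev_rcons /= path_sortedE; last by move=> a b c /= h1 h2; exact: leq_trans h2 h1.
rewrite all_rev rev_sorted andbC; congr (_ && _).
Qed.

Lemma mem_SL m k s :
  (s \in SL m k) = [&& size s == m, sorted leq s & all (fun y => y <= k) s].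
Proof.
elim: m k s => [|m IHm] k s.
  by case: s.
elim: k s => [|k IHk] s; rewrite SL_S.
- case/lastP: s => [|s x].
    by rewrite /=; apply/mapP => -[y _] /(congr1 size); rewrite size_rcons.
  rewrite cat0s size_rcons sorted_rcons_leq all_rcons eqSS.
  case: (eqVneq x 0) => [->|hx].
    rewrite (mem_map (@rcons_injl _ 0)) IHm /=.
    by case: (size s == m); case: (sorted leq s) => //=; rewrite andbb.
  rewrite -lt0n in hx; rewrite leqNgt hx /= !andbF.
  apply: negbTE; apply/negP => /mapP [y _] /rcons_inj [_ E]; by rewrite E in hx.
- case/lastP: s => [|s x].
    rewrite mem_cat IHk /=; apply/mapP => -[y _] /(congr1 size); by rewrite size_rcons.
  rewrite mem_cat IHk size_rcons sorted_rcons_leq all_rcons eqSS all_rcons.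
  case: (ltngtP x k.+1) => hx.
  + have hx' : x <= k by [].
    have -> : (rcons s x \in [seq rcons y k.+1 | y <- SL m k.+1]) = false.
      apply: negbTE; apply/negP => /mapP [y _] /rcons_inj [_ E]; by rewrite E ltnn in hx.
    rewrite orbF hx' /=.
    case: (size s == m) => //=; case: (sorted leq s) => //=.
    case A: (all (fun y => y <= x) s) => //=.
    have h1 : all (fun y => y <= k) s by apply: sub_all A => y /= h; exact: leq_trans h hx'.
    have h2 : all (fun y => y <= k.+1) s by apply: sub_all h1 => y /= h; exact: leqW.
    by rewrite h1 h2.
  + have -> : x <= k = false by lia.
    rewrite /= !andbF /=.
    apply: negbTE; apply/negP => /mapP [y _] /rcons_inj [_ E]; by rewrite E ltnn in hx.
  + subst x. rewrite (mem_map (@rcons_injl _ k.+1)) IHm ltnn /= !andbF /=.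
    by case: (size s == m); case: (sorted leq s) => //=; rewrite andbb.
Qed.

Lemma uniq_SL m k : uniq (SL m k).
Proof.
elim: m k => [|m IHm] k //.
elim: k => [|k IHk]; rewrite SL_S cat_uniq (map_inj_uniq (@rcons_injl _ _)) IHm ?andbT.
  by rewrite /=; apply/hasPn => y.
rewrite IHk /=; apply/hasPn => y /mapP [s _ ->].
change (~~ (rcons s k.+1 \in SL m.+1 k)). by rewrite mem_SL all_rcons ltnn /= !andbF.
Qed.
Local Open Scope ring_scope.
Lemma tuple_SL m k (F : seq nat -> Qq) :
  \sum_(a : m.-tuple 'I_k.+1 | sorted leq (map (@nat_of_ord _) a)) F (map (@nat_of_ord _) a)
  = \sum_(s <- SL m k) F s.
Proof.
rewrite -(big_map (fun a : m.-tuple 'I_k.+1 => map (@nat_of_ord _) a) (fun s => sorted leq s) F).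
rewrite -big_filter; apply: perm_big; apply: uniq_perm.
- rewrite filter_uniq // map_inj_uniq ?index_enum_uniq //.
  move=> a b /(inj_map (@ord_inj _)) E; exact: val_inj.
- exact: uniq_SL.
move=> s; rewrite mem_filter mem_SL.
case: (sorted leq s) => /=; last by rewrite andbF.
apply/idP/idP.
- move/mapP => [a _ ->]; rewrite size_map size_tuple eqxx /=.
  by apply/allP => y /mapP [z _ ->]; rewrite -ltnS ltn_ord.
move=> /andP [/eqP hs ha].
have hs' : size (map (@inord k) s) == m by rewrite size_map hs.
apply/mapP; exists (Tuple hs'); first exact: mem_index_enum.
rewrite /= -map_comp -{1}(map_id s); apply/esym/eq_in_map => y hy /=.
by rewrite inordK // ltnS; move/allP: ha; apply.
Qed.

Definition wf (t y : nat) : Qq := if (y %% 2 != t)%N then qint y.+1 ^+ 2 else 0.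
Definition hS (t m k : nat) : Qq := \sum_(s <- SL m k) \prod_(y <- s) wf t y.

Lemma prod_if (T : Type) (P : pred T) (g : T -> Qq) (s : seq T) :
  \prod_(x <- s) (if P x then g x else 0) = if all P s then \prod_(x <- s) g x else 0.
Proof.
elim: s => [|x s IH]; first by rewrite !big_nil.
rewrite !big_cons IH /=; case: (P x) => /=; last by rewrite mul0r.
by case: (all P s) => //; rewrite mulr0.
Qed.

Lemma partsum_hS t m k : partsum t m k = hS t m k.
Proof.
rewrite /partsum /hS -tuple_SL big_mkcondr; apply: eq_bigr => a _.
by rewrite -prod_if big_map.
Qed.

Lemma hS0 t k : hS t 0 k = 1.
Proof. by rewrite /hS /= big_seq1 big_nil. Qed.

Lemma hS_S t m k : hS t m.+1 k = (if k is k'.+1 then hS t m.+1 k' else 0) + wf t k * hS t m k.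
Proof.
rewrite /hS SL_S big_cat big_map /=; congr (_ + _).
  by case: k => [|k]; [rewrite big_nil|].
rewrite big_distrr /=; apply: eq_bigr => s _.
by rewrite -cats1 big_cat big_seq1 mulrC.
Qed.

Lemma parity t k : (t <= 1)%N -> (k.+1 %% 2 == t)%N = (k %% 2 != t)%N.
Proof. by rewrite !modn2 /=; case: t => [|[|]] //; case: (odd k). Qed.

Lemma cf_wf t k : (t <= 1)%N -> cf t k.+1 = wf t k.
Proof. by move=> ht; rewrite /cf /wf parity. Qed.

Lemma hS_shift t m k : (t <= 1)%N -> wf t k * hS t m k.+1 = wf t k * hS t m k.
Proof.
move=> ht; case: m => [|m]; first by rewrite !hS0.
rewrite hS_S /=.
case E: (k %% 2 != t)%N; last first.
  have w0 : wf t k = 0 by rewrite /wf E.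
  by rewrite w0 !mul0r.
have -> : wf t k.+1 = 0 by rewrite /wf parity // E.
by rewrite mul0r addr0.
Qed.

Definition A (t n k : nat) : Qq :=
  if (k <= n)%N && ~~ odd (n - k) then hS t ((n - k)./2) k else 0.

Lemma A_rec t n k : (t <= 1)%N ->
  A t n.+1 k = (if k is k'.+1 then A t n k' else 0) + cf t k.+1 * A t n k.+1.
Proof.
move=> ht; rewrite cf_wf //.
case: (ltnP n.+1 k) => hk.
  rewrite /A.
  have -> : (k <= n.+1)%N = false by lia.
  have -> : (k.+1 <= n)%N = false by lia.
  case: k hk => [|k] hk //=.
  have -> : (k <= n)%N = false by lia.
  by rewrite /= mulr0 addr0.
have [d hd] : exists d, n.+1 = (k + d)%N by exists (n.+1 - k)%N; lia.
case: d hd => [|[|d]] hd.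
- have -> : k = n.+1 by lia.
  rewrite /A subnn leqnn /= subnn leqnn /=.
  have -> : (n.+2 <= n)%N = false by lia.
  by rewrite /= !hS0 mulr0 addr0.
- have -> : k = n by lia.
  rewrite /A.
  have -> : (n.+1 - n = 1)%N by lia.
  have -> : (n.+1 <= n)%N = false by lia.
  rewrite /= mulr0 addr0 andbF.
  case: (n) => [|n'] //=.
  have -> : (n'.+1 - n' = 1)%N by lia.
  by rewrite andbF.
- have hn : n = (k + d.+1)%N by lia.
  subst n; rewrite /A.
  have -> : ((k + d.+1).+1 - k = d.+2)%N by lia.
  have -> : ((k + d.+1) - k.+1 = d)%N by lia.
  have -> : (k <= (k + d.+1).+1)%N = true by lia.
  have -> : (k.+1 <= (k + d.+1))%N = true by lia.
  rewrite /=.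
  clear hd hk; case: k => [|k] /=.
    case: (odd d) => /=; first by rewrite mulr0 addr0.
    by rewrite hS_S /= hS_shift // add0r.
  have -> : ((k.+1 + d.+1) - k = d.+2)%N by lia.
  have -> : (k <= (k.+1 + d.+1))%N = true by lia.
  rewrite /=.
  case: (odd d) => /=; first by rewrite mulr0 addr0.
  by rewrite hS_S /= hS_shift.
Qed.

Lemma A_gt t n k : (n < k)%N -> A t n k = 0.
Proof. move=> h; rewrite /A; have -> : (k <= n)%N = false by lia. by []. Qed.

Lemma cf0 t : cf t 0 = 0.
Proof. rewrite /cf qint0 expr0n /=; by case: (_ == _). Qed.

Lemma Xn_A t n : (t <= 1)%N -> 'X^n = \sum_(0 <= k < n.+1) A t n k *: Qp t k.
Proof.
move=> ht; elim: n => [|n IH].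
  rewrite big_nat1 /A /= hS0 scale1r /Qp /= iprod0 expr0. reflexivity.
rewrite exprS IH big_distrr /=.
under eq_bigr => k _ do rewrite -scalerAr Qp_rec // scalerDr scalerA.
rewrite big_split /=.
under [RHS]eq_bigr => k _ do rewrite A_rec // scalerDl.
rewrite big_split /=; congr (_ + _).
  rewrite [RHS]big_nat_recl // scale0r add0r. reflexivity.
rewrite big_nat_recl // cf0 mulr0 scale0r add0r.
rewrite big_nat_recr //= big_nat_recr //= !A_gt // !mulr0 !scale0r !addr0.
apply: eq_bigr => k _; rewrite mulrC. reflexivity.
Qed.

Lemma even_sum (G : nat -> UI) n :
  \sum_(0 <= j < n.+1) (if ~~ odd j then G j else 0) = \sum_(0 <= m < n./2.+1) G (2 * m)%N.
Proof.
elim: n => [|n IH].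
  by rewrite !big_nat1 /= muln0.
rewrite big_nat_recr //= IH.
have e := odd_double_half n.
rewrite uphalf_half; case hn: (odd n) => /=.
  rewrite add1n [RHS]big_nat_recr //=; congr (_ + G _).
  rewrite hn in e; rewrite -mul2n in e; lia.
by rewrite add0n addr0.
Qed.

Theorem corollary2p13 (t : nat) (ht : (t <= 1)%N) (n : nat) :
  ('X ^+ n : UI) =
  \sum_(0 <= m < (n./2).+1)
     (qfact (n - 2 * m) * partsum t m (n - 2 * m)) *: Pcan t (n - 2 * m).
Proof.
rewrite (@Xn_A t n ht) big_nat_rev /=.
under eq_big_nat => i /andP [_ hi].
  rewrite add0n subSS /A leq_subr /= subKn; last by rewrite -ltnS.
  have -> : ((if ~~ odd i then hS t i./2 (n - i) else 0) *: Qp t (n - i))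
    = if ~~ odd i then hS t i./2 (n - i) *: Qp t (n - i) else 0
    by case: (odd i); rewrite ?scale0r.
  over.
rewrite even_sum; apply: eq_bigr => m _.
by rewrite mulrC -scalerA Pcan_Qp partsum_hS mul2n doubleK.
Qed.
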